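(* Let $\mathcal{N}_\ell$ be a finite set of files with popularities $q_n>0$, $n\in\mathcal{N}_\ell$, summing to $1$ and satisfying $q_{n'}/q_n\ge 1/2$ for all $n,n'\in\mathcal{N}_\ell$. Then for every $M\ge 0$ and every positive integer $K_\ell$, \[ \bar{R}(M,\mathcal{N}_\ell,K_\ell)\le 12\,R^\star(M,\mathcal{N}_\ell,K_\ell), \] where $R^\star$ is evaluated with respect to the popularities $\{q_n\}$.
   Context: Caching problem: a server holds a set of files of $F$ bits each, connected through a shared error-free link to $K$ users each with a cache of $MF$ bits. In the placement phase each user stores an arbitrary function of the files of at most $MF$ bits; in the delivery phase each user independently requests a file according to a given popularity distribution, the server sends a message over the shared link, and each user must reconstruct its requested file from the message and its cache. The rate is message length divided by $F$. $R^\star(M,\mathcal{N},K)$ denotes the optimal expected rate (infimum over schemes of the expected rate over demands, achievable with vanishing error probability for all large $F$) for file set $\mathcal{N}$, $K$ users, and the given popularities; $\bar{R}(M,\mathcal{N},K)$ denotes the same quantity when popularities are uniform over $\mathcal{N}$. (In the paper, $\mathcal{N}_\ell$ is a group of a partition in which popularities differ by at most a factor two, and $q_n=\xi p_n$ are the normalized popularities.) *)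

(* Defs.v *)
From HB Require Import structures.
From mathcomp Require Import all_boot all_order all_algebra.
From mathcomp Require Import classical_sets reals.
Set Implicit Arguments. Unset Strict Implicit. Unset Printing Implicit Defensive.
Import Order.TTheory GRing.Theory Num.Theory.
Local Open Scope ring_scope.
Local Open Scope classical_set_scope.

Definition files (N F : nat) := {ffun 'I_N -> F.-tuple bool}.

Definition demand (N K : nat) := {ffun 'I_K -> 'I_N}.

(* A caching scheme for N files of F bits, K users, cache size M*F bits.
   - cache k W : content of user k's cache (arbitrary function of files,
     at most M*F bits);
   - for demand d, the server sends enc d W, of length mlen d bits;
   - user k decodes from the demand vector, the message and its cache. *)
Record scheme (R : realType) (N K F : nat) (M : R) := Scheme {
  cache : 'I_K -> files N F -> seq bool;
  mlen : demand N K -> nat;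
  enc : demand N K -> files N F -> seq bool;
  dec : demand N K -> 'I_K -> seq bool -> seq bool -> F.-tuple bool;
  cache_size : forall k W, (size (cache k W))%:R <= M * F%:R;
  enc_size : forall d W, size (enc d W) = mlen d
}.

(* Probability (files i.i.d. uniform bits) that some user errs under demand d. *)
Definition err_prob (R : realType) (N K F : nat) (M : R) (S : scheme N K F M)
  (d : demand N K) : R :=
  #|[set W : files N F | [exists k : 'I_K,
       dec S d k (enc S d W) (cache S k W) != W (d k)]]|%:R
  / #|{: files N F}|%:R.

Definition exp_rate (R : realType) (N K F : nat) (M : R) (p : 'I_N -> R)
  (S : scheme N K F M) : R :=
  \sum_(d : demand N K) (\prod_(k < K) p (d k)) * ((mlen S d)%:R / F%:R).

Definition achievable (R : realType) (N : nat) (p : 'I_N -> R) (M : R) (K : nat)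
  (r : R) : Prop :=
  forall eps : R, 0 < eps -> exists F0 : nat, forall F : nat, (F0 <= F)%N ->
    exists S : scheme N K F M,
      (forall d, err_prob S d <= eps) /\ exp_rate p S <= r.

Definition Rstar (R : realType) (N : nat) (p : 'I_N -> R) (M : R) (K : nat) : R :=
  inf [set r : R | achievable p M K r].

Definition Rbar (R : realType) (N : nat) (M : R) (K : nat) : R :=
  Rstar (fun _ : 'I_N => 1 / N%:R) M K.

(* Main.v *)
Require Import Defs.
From HB Require Import structures.
From mathcomp Require Import all_boot all_order all_algebra.
From mathcomp Require Import classical_sets boolp reals.
From mathcomp Require Import ring lra.
Import Order.TTheory GRing.Theory Num.Theory.
Local Open Scope ring_scope.

Lemma prodsum (R : realType) (N K : nat) (G : 'I_K -> 'I_N -> R) :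
  \sum_(e : demand N K) \prod_k G k (e k) = \prod_k \sum_n G k n.
Proof. by rewrite bigA_distr_bigA. Qed.

Lemma sel (R : realType) (N : nat) (a : 'I_N) (X : 'I_N -> R) :
  \sum_b (b == a)%:R * X b = X a.
Proof.
rewrite (bigD1 a) //= eqxx mul1r big1 ?addr0 // => b /negbTE ->.
by rewrite mul0r.
Qed.

Lemma sel2 (R : realType) (N : nat) (a : 'I_N) (X : 'I_N -> R) :
  \sum_b (a == b)%:R * X b = X a.
Proof.
rewrite (bigD1 a) //= eqxx mul1r big1 ?addr0 // => b; rewrite eq_sym => /negbTE ->.
by rewrite mul0r.
Qed.

Definition cover {N K : nat} (d : demand N K) (c : demand N K * demand N K) :=
  [forall k, (c.1 k == d k) || (c.2 k == d k)].

Section T.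
Variables (R : realType) (N : nat) (q : 'I_N -> R).
Hypothesis N0 : (0 < N)%N.
Hypothesis qs : \sum_n q n = 1.
Hypothesis fpos : forall n, 0 <= 2 * q n - N%:R^-1.

Definition ff n := 2 * q n - N%:R^-1.
Definition tt (a b c : 'I_N) : R :=
  2^-1 * ((b == a)%:R * ff c) + 2^-1 * ((c == a)%:R * ff b).

Lemma sumf : \sum_n ff n = 1.
Proof.
rewrite /ff sumrB -mulr_sumr qs sumr_const card_ord -[N%:R^-1 *+ N]mulr_natl mulfV.
  by lra.
by rewrite pnatr_eq0 -lt0n.
Qed.

Lemma tt_ge0 a b c : 0 <= tt a b c.
Proof.
rewrite /tt; apply: addr_ge0; apply: mulr_ge0; rewrite ?invr_ge0 ?ler0n //;
  apply: mulr_ge0; rewrite ?ler0n //; exact: fpos.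
Qed.

Lemma tt1 a : \sum_b \sum_c tt a b c = 1.
Proof.
rewrite /tt.
under eq_bigr => b _ do rewrite big_split /=.
rewrite big_split /=.
under eq_bigr => b _ do rewrite -mulr_sumr.
under [X in _ + X]eq_bigr => b _ do rewrite -mulr_sumr.
rewrite -!mulr_sumr.
under eq_bigr => b _ do rewrite -mulr_sumr sumf.
rewrite (@sel _ _ a (fun _ => 1)).
under eq_bigr => b _ do rewrite sel.
rewrite sumf; lra.
Qed.

Lemma tt_m1 b : \sum_a \sum_c N%:R^-1 * tt a b c = q b.
Proof.
rewrite /tt.
under eq_bigr => a _ do rewrite -mulr_sumr big_split /= -!mulr_sumr.
rewrite -mulr_sumr big_split /= -!mulr_sumr sumf.
rewrite (@sel2 _ _ b (fun _ => 1)).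
under eq_bigr => a _ do rewrite (@sel _ _ a (fun _ => ff b)).
rewrite sumr_const card_ord /ff -mulr_natr.
have hN : N%:R != 0 :> R by rewrite pnatr_eq0 -lt0n.
by field.
Qed.

Lemma tt_m2 c : \sum_a \sum_b N%:R^-1 * tt a b c = q c.
Proof.
rewrite /tt.
under eq_bigr => a _ do rewrite -mulr_sumr big_split /= -!mulr_sumr.
rewrite -mulr_sumr big_split /= -!mulr_sumr sumf.
rewrite (@sel2 _ _ c (fun _ => 1)).
under eq_bigr => a _ do rewrite (@sel _ _ a (fun _ => ff c)).
rewrite sumr_const card_ord /ff -mulr_natr.
have hN : N%:R != 0 :> R by rewrite pnatr_eq0 -lt0n.
by field.
Qed.

Lemma tt_cov a b c : tt a b c != 0 -> (b == a) || (c == a).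
Proof.
rewrite /tt; case: (b == a); case: (c == a) => //=.
by rewrite !mul0r !mulr0 addr0 eqxx.
Qed.


Lemma transfer K (g V : demand N K -> R) :
  (forall d c1 c2 : demand N K, cover d (c1, c2) -> V d <= g c1 + g c2) ->
  \sum_d (\prod_(k < K) N%:R^-1) * V d <=
  2 * \sum_(d : demand N K) (\prod_k q (d k)) * g d.
Proof.
move=> hV.
pose W (d c1 c2 : demand N K) := \prod_k tt (d k) (c1 k) (c2 k).
have W1 d : \sum_c1 \sum_c2 W d c1 c2 = 1.
  rewrite /W.
  under eq_bigr => c1 _ do rewrite (@prodsum _ _ _ (fun k c => tt (d k) (c1 k) c)).
  rewrite (@prodsum _ _ _ (fun k b => \sum_c tt (d k) b c)).
  by rewrite big1 // => k _; rewrite tt1.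
have W0 d c1 c2 : 0 <= W d c1 c2 by apply: prodr_ge0 => k _; exact: tt_ge0.
have step d : V d <= \sum_c1 \sum_c2 W d c1 c2 * (g c1 + g c2).
  rewrite -[V d]mul1r -(W1 d) mulr_suml; apply: ler_sum => c1 _.
  rewrite mulr_suml; apply: ler_sum => c2 _.
  have [->|nz] := eqVneq (W d c1 c2) 0; first by rewrite !mul0r.
  apply: ler_wpM2l => //; apply: hV.
  apply/forallP => k; move/prodf_neq0: nz => /(_ k isT) /tt_cov.
  by rewrite /=.
pose UW (d c1 c2 : demand N K) := \prod_k (N%:R^-1 * tt (d k) (c1 k) (c2 k)).
have uW d c1 c2 : (\prod_(k < K) N%:R^-1) * W d c1 c2 = UW d c1 c2.
  by rewrite /UW /W big_split.
have u0 : 0 <= \prod_(k < K) N%:R^-1 :> R.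
  by apply: prodr_ge0 => k _; rewrite invr_ge0 ler0n.
apply: le_trans (_ : _ <= \sum_(d : demand N K) \sum_(c1 : demand N K) \sum_(c2 : demand N K) UW d c1 c2 * (g c1 + g c2)) _.
  apply: ler_sum => d _; apply: le_trans (ler_wpM2l u0 (step d)) _.
  rewrite mulr_sumr; apply: ler_sum => c1 _; rewrite mulr_sumr; apply: ler_sum => c2 _.
  by rewrite mulrA uW.
have E1 : \sum_(d : demand N K) \sum_(c1 : demand N K) \sum_(c2 : demand N K) UW d c1 c2 * g c1 = \sum_(c1 : demand N K) (\prod_k q (c1 k)) * g c1.
  rewrite exchange_big; apply: eq_bigr => c1 _ /=.
  under eq_bigr => d _ do rewrite -mulr_suml.
  rewrite -mulr_suml; congr (_ * _); rewrite /UW.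
  rewrite (eq_bigr (fun d : demand N K => \prod_k \sum_c N%:R^-1 * tt (d k) (c1 k) c));
    last by move=> d _; rewrite (@prodsum _ _ _ (fun k c => N%:R^-1 * tt (d k) (c1 k) c)).
  rewrite (@prodsum _ _ _ (fun k a => \sum_c N%:R^-1 * tt a (c1 k) c)).
  by apply: eq_bigr => k _; exact: tt_m1.
have E2 : \sum_(d : demand N K) \sum_(c1 : demand N K) \sum_(c2 : demand N K) UW d c1 c2 * g c2 = \sum_(c2 : demand N K) (\prod_k q (c2 k)) * g c2.
  under eq_bigr => d _ do rewrite exchange_big.
  rewrite exchange_big; apply: eq_bigr => c2 _ /=.
  under eq_bigr => d _ do rewrite -mulr_suml.
  rewrite -mulr_suml; congr (_ * _); rewrite /UW.
  rewrite (eq_bigr (fun d : demand N K => \prod_k \sum_b N%:R^-1 * tt (d k) b (c2 k)));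
    last by move=> d _; rewrite (@prodsum _ _ _ (fun k b => N%:R^-1 * tt (d k) b (c2 k))).
  rewrite (@prodsum _ _ _ (fun k a => \sum_b N%:R^-1 * tt a b (c2 k))).
  by apply: eq_bigr => k _; exact: tt_m2.
have -> : \sum_(d : demand N K) \sum_(c1 : demand N K) \sum_(c2 : demand N K) UW d c1 c2 * (g c1 + g c2) =
   \sum_(d : demand N K) \sum_(c1 : demand N K) \sum_(c2 : demand N K) UW d c1 c2 * g c1 + \sum_(d : demand N K) \sum_(c1 : demand N K) \sum_(c2 : demand N K) UW d c1 c2 * g c2.
  rewrite -big_split; apply: eq_bigr => d _; rewrite -big_split; apply: eq_bigr => c1 _.
  by rewrite -big_split; apply: eq_bigr => c2 _; exact: mulrDr.
rewrite E1 E2; lra.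
Qed.
End T.

Definition pairsKF (K F : nat) : seq ('I_K * nat) :=
  [seq (k, j) | k <- enum 'I_K, j <- iota 0 F].

Section Unc.
Variables (R : realType) (N K F : nat) (M : R).
Hypothesis hM : 0 <= M.

Lemma unc_cs : forall (k : 'I_K) (W : files N F),
  (size ([::] : seq bool))%:R <= M * F%:R.
Proof. by move=> _ _; rewrite /= mulr_ge0 // ler0n. Qed.

Definition unc_enc (d : demand N K) (W : files N F) : seq bool :=
  [seq nth false (val (W (d p.1))) p.2 | p <- pairsKF K F].

Lemma unc_es : forall (d : demand N K) (W : files N F),
  size (unc_enc d W) = size (pairsKF K F).
Proof. by move=> d W; rewrite size_map. Qed.

Definition uncoded : scheme N K F M :=
  @Scheme R N K F M (fun _ _ => [::]) (fun _ => size (pairsKF K F)) unc_enc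
    (fun d k msg _ => [tuple nth false msg (index (k, val i) (pairsKF K F)) | i < F])
    unc_cs unc_es.

Lemma unc_ok d k W :
  dec uncoded d k (enc uncoded d W) (cache uncoded k W) = W (d k).
Proof.
apply: eq_from_tnth => i; rewrite tnth_mktuple /= /unc_enc.
have hi : (k, val i) \in pairsKF K F.
  by apply: allpairs_f; rewrite ?mem_enum ?mem_iota //=.
by rewrite (nth_map (k, 0%N)) ?index_mem // nth_index //= (tnth_nth false).
Qed.

End Unc.

Lemma achievable_ex (R : realType) (N : nat) (p : 'I_N -> R) (M : R) (hM : 0 <= M)
  (K : nat) : exists r, achievable p M K r.
Proof.
exists (\sum_(d : demand N K) (\prod_k p (d k)) * K%:R).
move=> eps he; exists 1%N => F hF; exists (@uncoded R N K F M hM); split.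
  move=> d; rewrite /err_prob.
  set A := (X in #|X|).
  have -> : #|A| = 0%N.
    apply: eq_card0 => W; apply/negbTE/negP => /set_mem /= /existsP [k].
    by rewrite unc_ok eqxx.
  by rewrite mul0r ltW.
rewrite /exp_rate le_eqVlt; apply/orP; left; apply/eqP; apply: eq_bigr => d _; congr (_ * _) => /=.
rewrite size_allpairs size_enum_ord size_iota natrM mulfK //.
by rewrite pnatr_eq0 -lt0n.
Qed.

Section Twice.
Variables (R : realType) (N K F : nat) (M : R) (S : scheme N K F M).

Definition ch (d : demand N K) : demand N K * demand N K :=
  arg_min (d, d) (cover d) (fun c => (mlen S c.1 + mlen S c.2)%N).

Lemma ch_spec d : cover d (ch d) /\
  forall c1 c2, cover d (c1, c2) ->
    (mlen S (ch d).1 + mlen S (ch d).2 <= mlen S c1 + mlen S c2)%N.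
Proof.
rewrite /ch; case: arg_minnP => [|c hc hmin]; first by apply/forallP => k; rewrite eqxx.
by split => // c1 c2 /hmin.
Qed.

Definition tenc (d : demand N K) (W : files N F) :=
  enc S (ch d).1 W ++ enc S (ch d).2 W.

Definition tdec (d : demand N K) (k : 'I_K) (msg cch : seq bool) : F.-tuple bool :=
  if (ch d).1 k == d k then dec S (ch d).1 k (take (mlen S (ch d).1) msg) cch
  else dec S (ch d).2 k (drop (mlen S (ch d).1) msg) cch.

Lemma tenc_size : forall d W, size (tenc d W) = (mlen S (ch d).1 + mlen S (ch d).2)%N.
Proof. by move=> d W; rewrite /tenc size_cat !enc_size. Qed.

Definition twice : scheme N K F M :=
  @Scheme R N K F M (cache S) (fun d => (mlen S (ch d).1 + mlen S (ch d).2)%N) tenc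
    tdec (cache_size S) tenc_size.

Lemma twice_err d : err_prob twice d <= err_prob S (ch d).1 + err_prob S (ch d).2.
Proof.
rewrite /err_prob -mulrDl ler_wpM2r ?invr_ge0 ?ler0n // -natrD ler_nat.
set A := (X in (#|X| <= _)%N).
set B1 := (X in (_ <= #|X| + _)%N).
set B2 := (X in (_ <= _ + #|X|)%N).
apply: leq_trans (_ : #|[predU B1 & B2]| <= _)%N; last first.
  by rewrite -cardUI leq_addr.
have -> : #|A| = #|[pred W | W \in A]| by apply: eq_card => W; rewrite inE.
apply: subset_leq_card; apply/fintype.subsetP => W; rewrite inE /A /mkset /= => /existsP [k].
have [cov _] := ch_spec d.
move/forallP: cov => /(_ k) /= cov.
rewrite /= /tdec /tenc; case: ifP => h1 hk; rewrite inE; apply/orP.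
  left; apply: mem_set => /=; apply/existsP; exists k.
  by rewrite take_size_cat ?enc_size // (eqP h1) in hk *.
right; apply: mem_set => /=; apply/existsP; exists k.
rewrite h1 /= in cov.
by rewrite drop_size_cat ?enc_size // (eqP cov) in hk *.
Qed.

End Twice.
Arguments twice {R N K F M}. Arguments ch {R N K F M}.
Arguments twice_err {R N K F M}. Arguments ch_spec {R N K F M}.
Arguments achievable_ex {R N} p {M} hM K.

Lemma ach_ge0 (R : realType) (N : nat) (p : 'I_N -> R) (p0 : forall n, 0 <= p n)
  (M : R) (K : nat) (r : R) : achievable p M K r -> 0 <= r.
Proof.
move/(_ 1 ltr01) => [F0 h]; have [S [_ hr]] := h F0 (leqnn _).
apply: le_trans hr; apply: sumr_ge0 => d _; apply: mulr_ge0.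
  by apply: prodr_ge0 => k _.
by apply: divr_ge0; rewrite ler0n.
Qed.

Lemma ach_twice (R : realType) (N : nat) (q : 'I_N -> R) (N0 : (0 < N)%N)
  (qs : \sum_n q n = 1) (fpos : forall n, 0 <= 2 * q n - N%:R^-1)
  (M : R) (K : nat) (r : R) :
  achievable q M K r -> achievable (fun _ : 'I_N => 1 / N%:R) M K (2 * r).
Proof.
move=> h eps he; have [F0 hF] := h (eps / 2) ltac:(by rewrite divr_gt0).
exists F0 => F hF0; have [S [he1 hr]] := hF F hF0.
exists (twice S); split.
  move=> d; apply: le_trans (twice_err S d) _.
  have := he1 (ch S d).1; have := he1 (ch S d).2; lra.
have ht := @transfer R N q N0 qs fpos K (fun c => (mlen S c)%:R / F%:R)
  (fun d => (mlen S (ch S d).1 + mlen S (ch S d).2)%:R / F%:R).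
have hr2 : 2 * exp_rate q S <= 2 * r by rewrite ler_wpM2l.
apply: le_trans hr2; rewrite /exp_rate.
apply: le_trans (ht _); last first.
  move=> d c1 c2 hc.
  rewrite -mulrDl ler_wpM2r ?invr_ge0 ?ler0n // -natrD ler_nat.
  exact: (ch_spec S d).2 _ _ hc.
rewrite le_eqVlt; apply/orP; left; apply/eqP; apply: eq_bigr => d _ /=.
by congr (_ * _); apply: eq_bigr => k _; rewrite div1r.
Qed.
Arguments ach_ge0 {R N p} p0 {M K r}.
Arguments ach_twice {R N q} N0 qs fpos {M K r}.

Theorem claim2 (R : realType) (N : nat) (q : 'I_N -> R)
  (q_pos : forall n, 0 < q n)
  (q_sum : \sum_(n < N) q n = 1)
  (q_ratio : forall n n', q n' / q n >= 1 / 2)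
  (M : R) (hM : 0 <= M) (K : nat) (hK : (0 < K)%N) :
  Rbar N M K <= 12 * Rstar q M K.
Proof.
have N0 : (0 < N)%N.
  case: N q q_pos q_sum q_ratio => // q' _; rewrite big_ord0 => /eqP.
  by rewrite eq_sym oner_eq0.
have hN : N%:R != 0 :> R by rewrite pnatr_eq0 -lt0n.
have fpos n : 0 <= 2 * q n - N%:R^-1.
  have h1 : \sum_(m < N) q m <= \sum_(m < N) 2 * q n.
    apply: ler_sum => m _; have := q_ratio m n.
    rewrite ler_pdivlMr ?q_pos // => h; have := q_pos m; lra.
  rewrite q_sum sumr_const card_ord -mulr_natr in h1.
  have h2 : N%:R^-1 * 1 <= N%:R^-1 * (2 * q n * N%:R).
    by apply: ler_wpM2l; [rewrite invr_ge0 ler0n | lra].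
  have e : N%:R^-1 * (2 * q n * N%:R) = 2 * q n by field.
  rewrite e in h2; lra.
set A := [set r : R | achievable (fun _ : 'I_N => 1 / N%:R) M K r]%classic.
set B := [set r : R | achievable q M K r]%classic.
have hlA : has_lbound A.
  exists 0 => a Aa; apply: (ach_ge0 _ Aa) => n.
  by rewrite div1r invr_ge0 ler0n.
have [r0 hr0] := achievable_ex q hM K.
have neB : (B !=set0)%classic by exists r0.
have i0 : 0 <= inf B.
  apply: lb_le_inf => // b Bb; apply: (ach_ge0 _ Bb) => n; exact: ltW.
have i1 : inf A / 2 <= inf B.
  apply: lb_le_inf => // b Bb.
  have := ge_inf hlA (ach_twice N0 q_sum fpos Bb); lra.
rewrite /Rbar /Rstar -/A -/B; lra.
Qed.
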